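(* Let $r\geq1$ be odd, $m\geq 3$, $n=(r+1)m$, let $u$ be an integer with $\gcd(u,2^m-1)=1$, let $\alpha$ be a primitive element of $\mathbb{F}_{2^{rm}}$, and let $0\leq s,l\leq 2^{rm}-2$ be integers. For $0\le k\le 2^{rm}-2$ let $\Delta_k=\{\alpha^i\mid k\leq i\leq k+2^{rm-1}-1\}$. Let $F\colon\mathbb{F}_{2^{rm}}\times\mathbb{F}_{2^m}\to\mathbb{F}_2$ be the Boolean function with $$\mathrm{supp}(F)=\{(\gamma y^u,y)\mid y\in\mathbb{F}_{2^m}^*,\ \gamma\in\Delta_s\}\cup\{(\gamma,0)\mid\gamma\in\Delta_l\}.$$ Then $F$ is balanced.
   Context: $\mathbb{F}_{2^{rm}}\times\mathbb{F}_{2^m}$ is viewed as an $n$-dimensional $\mathbb{F}_2$-vector space ($\mathbb{F}_{2^m}\subseteq\mathbb{F}_{2^{rm}}$). An $n$-variable Boolean function is balanced if its support has exactly $2^{n-1}$ elements. *)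

(* Defs.v *)
From HB Require Import structures.
From mathcomp Require Import all_boot all_order all_algebra all_field.
Set Implicit Arguments. Unset Strict Implicit. Unset Printing Implicit Defensive.
Import GRing.Theory Num.Theory.
Local Open Scope ring_scope.

Definition subF (L : finFieldType) (m : nat) : {set L} :=
  [set y : L | y ^+ (2 ^ m)%N == y].
Definition subFstar (L : finFieldType) (m : nat) : {set L} :=
  [set y : L | (y != 0) && (y \in subF L m)].

Definition Delta (L : finFieldType) (N : nat) (alpha : L) (k : nat) : {set L} :=
  [set alpha ^+ (k + i)%N | i : 'I_(2 ^ N.-1)].

Definition suppF (L : finFieldType) (r m : nat) (u : int) (alpha : L)
  (s l : nat) : {set L * L} :=
  [set (g * y ^ u, y) | g in Delta (r * m) alpha s, y in subFstar L m]
  :|: [set (g, 0) | g in Delta (r * m) alpha l].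

Definition Ffun (L : finFieldType) (r m : nat) (u : int) (alpha : L)
  (s l : nat) : L * L -> bool := fun p => p \in suppF r m u alpha s l.

Definition balanced (T : finType) (n : nat) (f : T -> bool) : Prop :=
  #|[set x | f x]| = (2 ^ n.-1)%N.

(* Main.v *)
Require Import Defs.
From HB Require Import structures.
From mathcomp Require Import all_boot all_order all_algebra all_field.
From mathcomp Require Import zify.
From Stdlib Require Import Lia.
Import GRing.Theory Num.Theory.
Local Open Scope ring_scope.

Lemma dvd_pow_sub (m r : nat) : (2 ^ m - 1 %| 2 ^ (r * m) - 1)%N.
Proof.
have h1 : (1 <= 2 ^ (r * m))%N by rewrite expn_gt0.
rewrite -eqn_mod_dvd //.
rewrite mulnC expnM -modnXm.
have -> : (2 ^ m %% (2 ^ m - 1) = 1 %% (2 ^ m - 1))%N.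
  apply/eqP; rewrite eqn_mod_dvd ?expn_gt0 //.
by rewrite modnXm exp1n.
Qed.

Lemma card_Delta (L : finFieldType) (N : nat) (alpha : L) k :
  (2 <= N)%N -> (2 ^ N - 1)%N.-primitive_root alpha ->
  #|Delta N alpha k| = (2 ^ N.-1)%N.
Proof.
move=> hN pa; rewrite /Delta card_imset ?card_ord //.
move=> i j /eqP; rewrite (eq_prim_root_expr pa) eqn_modDl.
have lt : (2 ^ N.-1 < 2 ^ N - 1)%N.
  have -> : N = N.-1.+1 by rewrite prednK // (leq_trans _ hN).
  rewrite /= expnS.
  have : (2 <= 2 ^ N.-1)%N.
    by rewrite -{1}(expn1 2) leq_exp2l // -ltnS prednK // (leq_trans _ hN).
  lia.
rewrite !modn_small ?(ltn_trans (ltn_ord _) lt) //.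
by move/eqP => /val_inj.
Qed.

Lemma card_subFstar (L : finFieldType) (r m : nat) (alpha : L) :
  (1 <= m)%N -> (1 <= r)%N -> (2 ^ (r * m) - 1)%N.-primitive_root alpha ->
  #|subFstar L m| = (2 ^ m - 1)%N.
Proof.
move=> hm hr pa.
have pb := dvdn_prim_root pa (dvd_pow_sub m r).
set beta := alpha ^+ _ in pb.
have -> : subFstar L m = [set beta ^+ i | i : 'I_(2 ^ m - 1)].
  apply/setP => y; rewrite /subFstar /subF !inE.
  have e2 : (2 ^ m = (2 ^ m - 1).+1)%N.
    by rewrite subn1 prednK // expn_gt0.
  apply/idP/idP.
    case/andP => y0 /eqP hy.
    have hy1 : y ^+ (2 ^ m - 1) = 1.
      apply: (mulIf y0); rewrite mul1r -exprSr -e2 //.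
    case: (prim_rootP pb hy1) => i ->.
    by apply/imsetP; exists i.
  case/imsetP => i _ ->; apply/andP; split.
    rewrite expf_neq0 //; apply/negP => /eqP b0.
    move: (prim_expr_order pb); rewrite b0 expr0n.
    have : (2 ^ m - 1 != 0)%N.
      have : (2 <= 2 ^ m)%N by rewrite -{1}(expn1 2) leq_exp2l.
      lia.
    by move/negbTE => -> /eqP; rewrite eq_sym oner_eq0.
  have hb : beta ^+ (2 ^ m) = beta.
    by rewrite {1}e2 exprSr (prim_expr_order pb) mul1r.
  by rewrite -exprM mulnC exprM hb.
rewrite card_imset ?card_ord //.
move=> i j /eqP; rewrite (eq_prim_root_expr pb) !modn_small //.
by move/eqP => /val_inj.
Qed.

Theorem theorem3 (r m : nat) (u : int) (L : finFieldType) (alpha : L) (s l : nat) :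
  odd r -> (1 <= r)%N -> (3 <= m)%N ->
  #|L| = (2 ^ (r * m))%N ->
  coprimez u (2 ^ m - 1)%N%:Z ->
  (2 ^ (r * m) - 1)%N.-primitive_root alpha ->
  (s <= 2 ^ (r * m) - 2)%N -> (l <= 2 ^ (r * m) - 2)%N ->
  balanced ((r + 1) * m)%N (Ffun r m u alpha s l).
Proof.
move=> _ hr hm _ _ pa _ _.
have hN : (2 <= r * m)%N by rewrite (leq_trans _ (leq_mul hr (leqnn m))) // mul1n (leq_trans _ hm).
rewrite /balanced.
have -> : #|[set x | Ffun r m u alpha s l x]| = #|suppF r m u alpha s l|.
  by apply: eq_card => x; rewrite inE.
rewrite /suppF cardsU.
have -> : #|[set (g * y ^ u, y) | g in Delta (r * m) alpha s, y in subFstar L m]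
   :&: [set (g, 0) | g in Delta (r * m) alpha l]| = 0%N.
  apply/eqP; rewrite cards_eq0; apply/eqP/setP => [[a b]]; rewrite !inE.
  apply/negP => /andP [/imset2P [g y _ hy [_ eb]] /imsetP [g' _ [_ y0]]].
  by move: hy; rewrite /subFstar inE -eb y0 eqxx.
rewrite subn0 curry_imset2X card_in_imset; last first.
  move=> [g y] [g' y']; rewrite !inE /= => /andP [_ /andP [y0 _]] _ [e ey]; subst y'.
  congr pair; apply: (mulIf _ e).
  exact: expfz_neq0.
rewrite cardsX [#|[set (_, 0) | _ in _]|]card_imset; last by move=> x y [].
rewrite !card_Delta // (@card_subFstar L r m alpha _ hr pa) ?(leq_trans _ hm) //.
have e : ((r + 1) * m).-1 = (r * m).-1 + m.
  rewrite mulnDl mul1n; lia.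
rewrite e expnD.
have : (1 <= 2 ^ m)%N by rewrite expn_gt0.
set a := (2 ^ m)%N; set b := (2 ^ (r * m).-1)%N; nia.
Qed.
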